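(* The $k$-clique problem can be solved by a $(k+1)$-memory TM-TLM in $(k^2n^k,\,k^2n^k)$-time, i.e. with time complexity $O(k^2n^k)$ and IO complexity $O(k^2n^k)$, where $n$ is the number of vertices of the input graph.
   Context: The $k$-clique problem: given a graph $G$ with $n$ vertices and an integer $k$, decide whether $G$ contains a clique on $k$ vertices. A Turing machine with two-level memory (TM-TLM) with main memory size $M$ has a main memory tape of $M$ cells, an unbounded external memory tape, and an address tape for the external memory; it has a finite state set, alphabets, and a transition function $\delta: Q\times\Gamma\to Q\times\Gamma\times\{L,S,R\}$ acting on the main memory tape, plus special read and write states: on entering a read state the machine writes an address $addr$ on the address tape and the main memory cell under the head receives the content of external cell $addr$; on entering a write state, external cell $addr$ receives the content of the main memory cell under the head. Each Read/Write is one IO operation of unit cost. Time = number of transitions other than Read/Write operations; IO time = number of Read/Write operations. A $k$-memory $(T(n),IO(n))$-time TM-TLM has main memory size $k$, time complexity $O(T(n))$ and IO complexity $O(IO(n))$. The input graph is stored on the external memory tape, and (by tape compression) the identifier of a vertex or an edge is assumed to fit in a single tape cell. *)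

(* Defs.v *)
From mathcomp Require Import all_boot.
Set Implicit Arguments. Unset Strict Implicit. Unset Printing Implicit Defensive.

Inductive move := MvL | MvS | MvR.

(* operation on the (write-only) address tape performed by an ordinary
   transition: leave it unchanged, write a symbol in the next cell, or erase it *)
Inductive addr_op (A : Type) := AKeep | APush of A | AClear.
Arguments AKeep {A}. Arguments AClear {A}.

Inductive kind := KNormal | KRead | KWrite | KAccept | KReject.

(* A TM-TLM with state set Q, tape alphabet 'I_N and main memory of M cells. *)
Record tmtlm (Q : finType) (N M : nat) := TMTLM {
  q_init : Q;
  q_kind : Q -> kind;
  delta : Q -> 'I_N -> Q * 'I_N * move * addr_op 'I_N;
  q_next : Q -> Q }.

Record config (Q : finType) (N M : nat) := Config {
  c_state : Q;
  c_head  : 'I_M;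
  c_mem   : 'I_M -> 'I_N;
  c_addr  : seq 'I_N;
  c_ext   : nat -> 'I_N }.

Definition mv_head (M : nat) (h : 'I_M) (m : move) : 'I_M :=
  match m with
  | MvS => h
  | MvL => insubd h h.-1
  | MvR => insubd h h.+1
  end.

Definition upd (T : eqType) (A : Type) (f : T -> A) (x : T) (a : A) : T -> A :=
  fun y => if y == x then a else f y.

(* the address written on the address tape, read as a base-N number
   (first written cell = least significant digit) *)
Definition addr_val (N : nat) (w : seq 'I_N) : nat :=
  foldr (fun a acc => nat_of_ord a + N * acc) 0 w.

Definition apply_addr_op (N : nat) (w : seq 'I_N) (o : addr_op 'I_N) : seq 'I_N :=
  match o with AKeep => w | APush s => rcons w s | AClear => [::] end.

(* One step. The boolean is [true] for an IO operation (Read/Write) and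
   [false] for an ordinary transition (counted in time). *)
Definition step (Q : finType) (N M : nat) (T : tmtlm Q N M) (c : config Q N M)
  : option (config Q N M * bool) :=
  let q := c_state c in
  let h := c_head c in
  match q_kind T q with
  | KAccept | KReject => None
  | KNormal =>
      let '(q', s, m, o) := delta T q (c_mem c h) in
      Some (Config q' (mv_head h m) (upd (c_mem c) h s)
                   (apply_addr_op (c_addr c) o) (c_ext c), false)
  | KRead =>
      Some (Config (q_next T q) h (upd (c_mem c) h (c_ext c (addr_val (c_addr c))))
                   (c_addr c) (c_ext c), true)
  | KWrite =>
      Some (Config (q_next T q) h (c_mem c) (c_addr c)
                   (upd (c_ext c) (addr_val (c_addr c)) (c_mem c h)), true)
  end.

(* runs T c t io c' : from c the machine reaches c' using t ordinary
   transitions (time) and io Read/Write operations (IO time) *)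
Inductive runs (Q : finType) (N M : nat) (T : tmtlm Q N M)
  : config Q N M -> nat -> nat -> config Q N M -> Prop :=
| runs_refl c : runs T c 0 0 c
| runs_time c c' t io c'' :
    step T c = Some (c', false) -> runs T c' t io c'' -> runs T c t.+1 io c''
| runs_io c c' t io c'' :
    step T c = Some (c', true) -> runs T c' t io c'' -> runs T c t io.+1 c''.

Definition halted (Q : finType) (N M : nat) (T : tmtlm Q N M) (c : config Q N M) :=
  match q_kind T (c_state c) with KAccept | KReject => true | _ => false end.

Definition accepted (Q : finType) (N M : nat) (T : tmtlm Q N M) (c : config Q N M) :=
  match q_kind T (c_state c) with KAccept => true | _ => false end.

(* Alphabet for inputs with n vertices: 'I_(n*n).+2, so that the identifier of
   a vertex or of an edge (a pair of vertices) fits in one cell (tape compression). *)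
Notation alph n := (n * n).+2.

(* Encoding of the input graph on the external memory tape: adjacency matrix,
   the entry for (u,v) is stored at address u + (n*n+2) * v, as symbol 1 (edge)
   or 0 (no edge); all other cells are blank (0). *)
Definition input_ext (n : nat) (G : rel 'I_n) (a : nat) : 'I_(alph n) :=
  match insub (a %% alph n), insub (a %/ alph n) with
  | Some u, Some v => if G u v then inord 1 else ord0
  | _, _ => ord0
  end.

Definition init_config (Q : finType) (n M : nat) (T : tmtlm Q (alph n) M.+1)
  (G : rel 'I_n) : config Q (alph n) M.+1 :=
  Config (q_init T) ord0 (fun _ => ord0) [::] (input_ext G).

Definition has_clique (n : nat) (G : rel 'I_n) (k : nat) : Prop :=
  exists S : {set 'I_n}, #|S| = k /\ {in S &, forall u v, u != v -> G u v}.

(* Main.v *)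
From HB Require Import structures.
Require Import Defs.
From mathcomp Require Import all_boot.
From Stdlib Require Import FunctionalExtensionality.
From mathcomp Require Import zify.
Set Implicit Arguments. Unset Strict Implicit. Unset Printing Implicit Defensive.
Inductive phase := PInit | PEnter | PPush1 | PPush2 | PRd | PTest | PNext | PInc | PAcc | PRej.
Definition ph2n ph := match ph with PInit => 0 | PEnter => 1 | PPush1 => 2 | PPush2 => 3 | PRd => 4
 | PTest => 5 | PNext => 6 | PInc => 7 | PAcc => 8 | PRej => 9 end.
Definition n2ph m := match m with 0 => PInit | 1 => PEnter | 2 => PPush1 | 3 => PPush2 | 4 => PRd
 | 5 => PTest | 6 => PNext | 7 => PInc | 8 => PAcc | _ => PRej end.
Definition ph2o ph : 'I_10 := inord (ph2n ph).
Lemma ph_can : cancel ph2o (fun o : 'I_10 => n2ph o). Proof. by case; rewrite /ph2o inordK. Qed.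
HB.instance Definition _ := Finite.copy phase (can_type ph_can).

Lemma upd_id (T : eqType) (A : Type) (f : T -> A) x : upd f x (f x) = f.
Proof. apply: functional_extensionality => y; rewrite /upd; by case: eqP => [->|]. Qed.

Lemma runs_trans (Q : finType) (N M : nat) (T : tmtlm Q N M) c1 t1 io1 c2 t2 io2 c3 :
  runs T c1 t1 io1 c2 -> runs T c2 t2 io2 c3 -> runs T c1 (t1 + t2) (io1 + io2) c3.
Proof.
elim=> [c|c c' t io c'' H _ IH|c c' t io c'' H _ IH] R2 //.
- by rewrite addSn; apply: runs_time H (IH R2).
- by rewrite addSn; apply: runs_io H (IH R2).
Qed.

Section Machine.
Variables k n : nat.
Notation K := k.+1.
Notation N := (alph n).
Definition St := (phase * 'I_K * 'I_K * 'I_K)%type.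

Definition tgt (s : St) : nat := let: (ph,d,i,p) := s in
  match ph with PEnter => d | PPush1 => i | PPush2 => d | PRd => k | PInc => d | _ => p end.
Definition knd (s : St) : kind := let: (ph,d,i,p) := s in
  match ph with PAcc => KAccept | PRej => KReject
  | PInit => if k == 0 then KAccept else if n < k then KReject else KNormal
  | PRd => if nat_of_ord p == k then KRead else KNormal
  | _ => KNormal end.
Definition act (s : St) (x : 'I_N) : St * 'I_N * move * addr_op 'I_N := let: (ph,d,i,p) := s in
  match ph with
  | PInit => (PEnter, ord0, ord0, p, x, MvS, AKeep)
  | PEnter => (PNext, d, ord0, p, ord0, MvS, AKeep)
  | PPush1 => (PPush2, d, i, p, x, MvS, APush x)
  | PPush2 => (PRd, d, i, p, x, MvS, APush x)
  | PTest => if nat_of_ord x == 1 then (PNext, d, inord i.+1, p, x, MvS, AClear)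
             else (PInc, d, i, p, x, MvS, AClear)
  | PNext => if i < d then (PPush1, d, i, p, x, MvS, AKeep)
             else if d.+1 == k then (PAcc, d, i, p, x, MvS, AKeep)
             else (PEnter, inord d.+1, i, p, x, MvS, AKeep)
  | PInc => if x.+1 < n then (PNext, d, ord0, p, inord x.+1, MvS, AKeep)
            else if nat_of_ord d == 0 then (PRej, d, i, p, x, MvS, AKeep)
            else (PInc, inord d.-1, i, p, x, MvS, AKeep)
  | _ => (s, x, MvS, AKeep) end.
Definition dlt (s : St) (x : 'I_N) : St * 'I_N * move * addr_op 'I_N :=
  let: (ph,d,i,p) := s in
  if p < tgt s then (ph, d, i, inord p.+1, x, MvR, AKeep)
  else if tgt s < p then (ph, d, i, inord p.-1, x, MvL, AKeep) else act s x.
Definition qn (s : St) : St := let: (ph,d,i,p) := s in (PTest,d,i,p).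
Definition Mach : tmtlm St N K := {| q_init := (PInit, ord0, ord0, ord0) : St; q_kind := knd; delta := dlt; q_next := qn |}.

Lemma stepN (s : St) h mem a e : knd s = KNormal ->
  step Mach (Config s h mem a e) =
  let '(q', x', m, o) := dlt s (mem h) in
    Some (Config q' (mv_head h m) (upd mem h x') (apply_addr_op a o) e, false).
Proof. by move=> H; rewrite /step /= H. Qed.

Variable G : rel 'I_n.
Definition E := input_ext G.
Definition mk ph d i p mem a : config St N K := Config ((ph,d,i,p) : St) p mem a E.
Definition reach (c c' : config St N K) m :=
  exists t io, runs Mach c t io c' /\ t + io <= m.

Lemma reach_refl c : reach c c 0.
Proof. by exists 0, 0; split => //; constructor. Qed.
Lemma reach_trans c1 c2 c3 m1 m2 : reach c1 c2 m1 -> reach c2 c3 m2 -> reach c1 c3 (m1 + m2).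
Proof.
move=> [t1 [io1 [R1 H1]]] [t2 [io2 [R2 H2]]]; exists (t1 + t2), (io1 + io2); split.
  exact: runs_trans R1 R2.
by rewrite addnACA leq_add.
Qed.
Lemma reach_le c c' m m' : reach c c' m -> m <= m' -> reach c c' m'.
Proof. by move=> [t [io [R H]]] Hm; exists t, io; split => //; apply: leq_trans Hm. Qed.
Lemma reach_step c c' b c'' m : step Mach c = Some (c', b) -> reach c' c'' m -> reach c c'' m.+1.
Proof.
move=> S [t [io [R H]]]; case: b S => S.
  by exists t, io.+1; split; [apply: runs_io S R | rewrite addnS].
by exists t.+1, io; split; [apply: runs_time S R | rewrite addSn].
Qed.

Lemma insubdS (p : 'I_K) : p.+1 < K -> insubd p p.+1 = inord p.+1.
Proof. by move=> H; apply: val_inj; rewrite val_insubd H /= inordK. Qed.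
Lemma insubdP (p : 'I_K) : insubd p p.-1 = inord p.-1.
Proof.
apply: val_inj; rewrite val_insubd /= inordK; last by rewrite ltnS (leq_trans (leq_pred _)) // -ltnS.
by rewrite (leq_ltn_trans (leq_pred _)).
Qed.

Lemma stepR ph d i (p : 'I_K) mem a : knd (ph,d,i,p) = KNormal -> p < tgt (ph,d,i,p) ->
  tgt (ph,d,i,p) <= k -> step Mach (mk ph d i p mem a) = Some (mk ph d i (inord p.+1) mem a, false).
Proof.
move=> Hk Hl Ht; rewrite /mk stepN // /dlt Hl /= upd_id insubdS //.
by rewrite ltnS (leq_trans Hl).
Qed.
Lemma stepL ph d i (p : 'I_K) mem a : knd (ph,d,i,p) = KNormal -> tgt (ph,d,i,p) < p ->
  step Mach (mk ph d i p mem a) = Some (mk ph d i (inord p.-1) mem a, false).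
Proof.
move=> Hk Hl; rewrite /mk stepN // /dlt Hl ltnNge ltnW //= upd_id insubdP.
by [].
Qed.
Lemma stepA ph d i (p : 'I_K) mem a : knd (ph,d,i,p) = KNormal -> tgt (ph,d,i,p) = p ->
  step Mach (mk ph d i p mem a) =
  let '(q', x', m, o) := act (ph,d,i,p) (mem p) in
    Some (Config q' (mv_head p m) (upd mem p x') (apply_addr_op a o) E, false).
Proof. by move=> Hk Ht; rewrite /mk stepN // /dlt Ht ltnn. Qed.

Lemma goto ph d i (p t : 'I_K) mem a : (forall q : 'I_K, tgt (ph,d,i,q) = t) ->
  (forall q : 'I_K, q != t -> knd (ph,d,i,q) = KNormal) ->
  reach (mk ph d i p mem a) (mk ph d i t mem a) k.
Proof.
move=> Ht Hk.
have R : forall m (q : 'I_K), q <= t -> t - q = m -> reach (mk ph d i q mem a) (mk ph d i t mem a) m.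
  elim=> [|m IH] q Hq Hm.
    have -> : q = t by apply: val_inj; apply/eqP; rewrite eqn_leq Hq -subn_eq0 Hm.
    exact: reach_refl.
  have Hqt : q < t by rewrite -subn_gt0 Hm.
  apply: (reach_step (b:=false) (c' := mk ph d i (inord q.+1) mem a)); first apply: stepR.
  - by apply: Hk; rewrite neq_ltn Hqt.
  - by rewrite Ht.
  - by rewrite Ht -ltnS.
  have Hq1 : q.+1 < K by rewrite ltnS (leq_trans Hqt) // -ltnS.
  by apply: IH; rewrite inordK // subnS Hm.
have L : forall m (q : 'I_K), t <= q -> q - t = m -> reach (mk ph d i q mem a) (mk ph d i t mem a) m.
  elim=> [|m IH] q Hq Hm.
    have -> : q = t by apply: val_inj; apply/eqP; rewrite eqn_leq Hq -subn_eq0 Hm.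
    exact: reach_refl.
  have Hqt : t < q by rewrite -subn_gt0 Hm.
  apply: (reach_step (b:=false) (c' := mk ph d i (inord q.-1) mem a)); first apply: stepL.
  - by apply: Hk; rewrite neq_ltn Hqt orbT.
  - by rewrite Ht.
  have Hq1 : q.-1 < K by rewrite (leq_ltn_trans (leq_pred _)).
  by apply: IH; rewrite inordK //; lia.
case: (leqP p t) => H.
  by apply: reach_le (R _ _ H erefl) _; rewrite (leq_trans (leq_subr _ _)) // -ltnS.
by apply: reach_le (L _ _ (ltnW H) erefl) _; rewrite (leq_trans (leq_subr _ _)) // -ltnS.
Qed.


Definition Gn (u v : nat) : bool :=
  match (insub u : option 'I_n), (insub v : option 'I_n) with
  | Some a, Some b => G a b | _, _ => false end.

Lemma readG (u v : 'I_N) : (nat_of_ord (E (addr_val [:: u; v])) == 1) = Gn u v.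
Proof.
rewrite /E /addr_val /= muln0 addn0 /input_ext.
have H1 : (u + N * v) %% N = u by rewrite addnC mulnC modnMDl modn_small.
have H2 : (u + N * v) %/ N = v by rewrite addnC mulnC divnMDl // divn_small ?addn0.
rewrite H1 H2 /Gn; case: (insub (nat_of_ord u) : option 'I_n) => [x|]; case: (insub (nat_of_ord v) : option 'I_n) => [y|] //=.
by case: (G x y) => //=; rewrite inordK.
Qed.

Lemma stepTest d i (p : 'I_K) mem a : step Mach (mk PTest d i p mem a) =
  Some (if nat_of_ord (mem p) == 1 then mk PNext d (inord i.+1) p mem [::]
        else mk PInc d i p mem [::], false).
Proof. by rewrite stepA //=; case: ifP; rewrite upd_id. Qed.

Definition allok (mem : 'I_K -> 'I_N) (d : 'I_K) (i : nat) := forall j : 'I_K, i <= j -> j < d -> Gn (mem j) (mem d).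

Lemma chk (d : 'I_K) : d < k -> forall m (i p : 'I_K) (mem : 'I_K -> 'I_N), d - i = m -> i <= d ->
 exists (p' i' : 'I_K) (mem' : 'I_K -> 'I_N), (forall j : 'I_K, j < k -> mem' j = mem j) /\
   ((allok mem d i /\ i' = d :> nat /\
      reach (mk PNext d i p mem [::]) (mk PNext d i' p' mem' [::]) (m * (3*k+5)))
    \/ (~ allok mem d i /\
      reach (mk PNext d i p mem [::]) (mk PInc d i' p' mem' [::]) (m * (3*k+5)))).
Proof.
move=> Hdk; elim=> [|m IH] i p mem Hm Hid.
  have Hi : nat_of_ord i = d by apply/eqP; rewrite eqn_leq Hid -subn_eq0 Hm.
  exists p, i, mem; split => //; left; split; last by split => //; apply: reach_refl.
  by move=> j Hj Hj'; move: (leq_ltn_trans Hj Hj'); rewrite Hi ltnn.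
have Hid' : i < d by rewrite -subn_gt0 Hm.
have S1 : step Mach (mk PNext d i p mem [::]) = Some (mk PPush1 d i p mem [::], false).
  by rewrite stepA //= Hid' upd_id.
have S2 : step Mach (mk PPush1 d i i mem [::]) = Some (mk PPush2 d i i mem [:: mem i], false).
  by rewrite stepA //= upd_id.
have S3 : step Mach (mk PPush2 d i d mem [:: mem i]) = Some (mk PRd d i d mem [:: mem i; mem d], false).
  by rewrite stepA //= upd_id.
set A := [:: mem i; mem d].
set mem1 := upd mem ord_max (E (addr_val A)).
have S4 : step Mach (mk PRd d i ord_max mem A) = Some (mk PTest d i ord_max mem1 A, true).
  by rewrite /step /= eqxx.
have Hm1 : forall j : 'I_K, j < k -> mem1 j = mem j.
  move=> j Hj; rewrite /mem1 /upd; case: eqP => // Hj'.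
  by move: Hj; rewrite Hj' /= ltnn.
have G1 : reach (mk PPush1 d i p mem [::]) (mk PPush1 d i i mem [::]) k by apply: goto.
have G2 : reach (mk PPush2 d i i mem [:: mem i]) (mk PPush2 d i d mem [:: mem i]) k by apply: goto.
have G3 : reach (mk PRd d i d mem A) (mk PRd d i ord_max mem A) k.
  apply: goto => // q Hq /=; case: eqP => // Hqk; case/eqP: Hq; exact: val_inj.
have Hrd : (nat_of_ord (mem1 ord_max) == 1) = Gn (mem i) (mem d).
  by rewrite /mem1 /upd eqxx readG.
have Hmd : mem1 d = mem d by apply: Hm1.
have Hmi : mem1 i = mem i by apply: Hm1; rewrite (leq_trans Hid') // ltnW.
case HG : (Gn (mem i) (mem d)).
  have S5 : step Mach (mk PTest d i ord_max mem1 A) =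
            Some (mk PNext d (inord i.+1) ord_max mem1 [::], false).
    by rewrite stepTest Hrd HG.
  have Hi1 : i.+1 < K by rewrite ltnS (leq_trans Hid') // ltnW.
  have Hx1 : d - (@inord k i.+1) = m by rewrite inordK // subnS Hm.
  have Hx2 : (@inord k i.+1) <= d by rewrite inordK.
  have [p' [i' [mem' [Hm' HH]]]] := IH (inord i.+1) ord_max mem1 Hx1 Hx2.
  exists p', i', mem'; split; first by move=> j Hj; rewrite Hm' // Hm1.
  have Hal : allok mem1 d (@inord k i.+1) <-> allok mem d i.
    rewrite /allok inordK //; split.
      move=> H j Hj Hjd; rewrite leq_eqVlt in Hj; case/orP: Hj => [/eqP Hj|Hj].
        by have -> : j = i by apply: val_inj.
      by move: (H j Hj Hjd); rewrite Hmd !Hm1 // (leq_trans Hjd) // ltnW.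
    by move=> H j Hj Hjd; rewrite Hmd Hm1 ?H // ?(ltnW Hj) // (leq_trans Hjd) // ltnW.
  case: HH => [[Ha [Hi' R]]|[Ha R]].
    left; split; first by apply/Hal.
    split => //.
    apply: reach_le (reach_step S1 (reach_trans G1 (reach_step S2 (reach_trans G2
       (reach_step S3 (reach_trans G3 (reach_step S4 (reach_step S5 R)))))))) _.
    rewrite !(addSn, addnS) /=; lia.
  right; split; first by move=> H; apply: Ha; apply/Hal.
  apply: reach_le (reach_step S1 (reach_trans G1 (reach_step S2 (reach_trans G2
     (reach_step S3 (reach_trans G3 (reach_step S4 (reach_step S5 R)))))))) _.
  rewrite !(addSn, addnS) /=; lia.
have S5 : step Mach (mk PTest d i ord_max mem1 A) = Some (mk PInc d i ord_max mem1 [::], false).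
  by rewrite stepTest Hrd HG.
exists ord_max, i, mem1; split => //; right; split.
  by move=> H; move: (H i (leqnn _) Hid'); rewrite HG.
apply: reach_le (reach_step S1 (reach_trans G1 (reach_step S2 (reach_trans G2
   (reach_step S3 (reach_trans G3 (reach_step S4 (reach_step S5 (reach_refl _))))))))) _.
rewrite !(addSn, addnS) /=; lia.
Qed.


Lemma inord_eq (j : nat) (d : 'I_K) : j = d -> inord j = d.
Proof. by move=> ->; apply: inord_val. Qed.

Lemma stepInc (d i : 'I_K) m a : step Mach (mk PInc d i d m a) =
  Some (if (m d).+1 < n then mk PNext d ord0 d (upd m d (inord (m d).+1)) a
        else if nat_of_ord d == 0 then Config ((PRej,d,i,d) : St) d m a E
        else mk PInc (inord d.-1) i d m a, false).
Proof. by rewrite stepA //=; case: ifP => _ //; case: ifP => _; rewrite upd_id. Qed.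

Lemma stepEnter (d i : 'I_K) m a : step Mach (mk PEnter d i d m a) =
  Some (mk PNext d ord0 d (upd m d ord0) a, false).
Proof. by rewrite stepA. Qed.

Lemma stepNextEnd (d i p : 'I_K) m a : ~~ (i < d) -> step Mach (mk PNext d i p m a) =
  Some (if d.+1 == k then Config ((PAcc,d,i,p) : St) p m a E
        else mk PEnter (inord d.+1) i p m a, false).
Proof. by move=> H; rewrite stepA //= (negbTE H); case: ifP => _; rewrite upd_id. Qed.

Definition Valid (y : nat -> nat) :=
  (forall j, j < k -> y j < n) /\ (forall a b, a < b -> b < k -> Gn (y a) (y b)).
Definition Agree (mem : 'I_K -> 'I_N) (d : nat) (y : nat -> nat) :=
  forall j : 'I_K, j < d -> y j = mem j.
Definition Ext (mem : 'I_K -> 'I_N) (d : 'I_K) :=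
  exists y, Agree mem d y /\ mem d <= y d /\ Valid y.
Definition NoAt (mem : 'I_K -> 'I_N) (d : 'I_K) :=
  ~ exists y, Agree mem d y /\ y d = mem d /\ Valid y.
Definition PV (mem : 'I_K -> 'I_N) (d : 'I_K) :=
  (forall j : 'I_K, j < d -> mem j < n) /\
  (forall a b : 'I_K, a < b -> b < d -> Gn (mem a) (mem b)).
Definition Res (d : 'I_K) (mem : 'I_K -> 'I_N) (c' : config St N K) :=
  if nat_of_ord d == 0 then knd (c_state c') = KReject
  else exists (i p : 'I_K) (mem' : 'I_K -> 'I_N),
    c' = mk PInc (inord d.-1) i p mem' [::] /\ forall j : 'I_K, j < d -> mem' j = mem j.
Definition CS (d : 'I_K) mem p cost := exists c',
  reach (mk PNext d ord0 p mem [::]) c' cost /\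
  ((Ext mem d /\ knd (c_state c') = KAccept) \/ (~ Ext mem d /\ Res d mem c')).

Definition P := 4 * K * K.


Lemma cand_loop (d : 'I_K) (Hdk : d < k) Wd
 (deeper : forall d' : 'I_K, nat_of_ord d' = d.+1 -> d' < k ->
    forall (mem : 'I_K -> 'I_N) (p : 'I_K), PV mem d' -> nat_of_ord (mem d') = 0 -> CS d' mem p Wd) :
 forall w (mem : 'I_K -> 'I_N) (p : 'I_K), n - mem d = w -> mem d < n -> PV mem d -> CS d mem p (w * (P + Wd)).
Proof.
have HdK : d <= k by apply: ltnW.
elim=> [|w IH] mem p0 Hw Hlt Hpv.
  by move: Hw Hlt; lia.
have IC : forall (i p : 'I_K) m1 c0, reach (mk PNext d ord0 p0 mem [::]) (mk PInc d i p m1 [::]) c0 ->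
    c0 + k + 1 <= P + Wd -> (forall j : 'I_K, j <= d -> m1 j = mem j) -> NoAt mem d ->
    CS d mem p0 (w.+1 * (P + Wd)).
  move=> i p m1 c0 R0 Hc Hag Hno.
  have G1 : reach (mk PInc d i p m1 [::]) (mk PInc d i d m1 [::]) k by apply: goto.
  have Hm1d : m1 d = mem d by apply: Hag.
  have S := stepInc d i m1 [::]; rewrite Hm1d in S.
  case: ifP S => Hn S.
    set m2 := upd m1 d (inord (mem d).+1) in S.
    have Hm2d : nat_of_ord (m2 d) = (mem d).+1.
      by rewrite /m2 /upd eqxx inordK // ltnS (leq_trans (ltnW Hn)) // /N; nia.
    have Hm2 : forall j : 'I_K, j < d -> m2 j = mem j.
      move=> j Hj; rewrite /m2 /upd; case: eqP => [E1|_]; first by move: Hj; rewrite E1 ltnn.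
      by apply: Hag; apply: ltnW.
    have Hpv2 : PV m2 d.
      split; first by move=> j Hj; rewrite Hm2 //; apply: Hpv.1.
      by move=> a b Hab Hbd; rewrite !Hm2 ?(ltn_trans Hab) //; apply: Hpv.2.
    have Hx1 : n - m2 d = w by rewrite Hm2d subnS Hw.
    have Hx2 : m2 d < n by rewrite Hm2d.
    have [c' [R' HH]] := IH m2 d Hx1 Hx2 Hpv2.
    exists c'; split.
      apply: reach_le (reach_trans R0 (reach_trans G1 (reach_step S R'))) _.
      by rewrite mulSn; lia.
    have Eq : Ext m2 d <-> Ext mem d.
      split.
        move=> [y [Ha [Hy Hv]]]; exists y; split; last split => //.
          by move=> j Hj; rewrite Ha // Hm2.
        by apply: leq_trans _ Hy; rewrite Hm2d.
      move=> [y [Ha [Hy Hv]]]; exists y; split; last split => //.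
        by move=> j Hj; rewrite Hm2 // Ha.
      rewrite Hm2d ltn_neqAle Hy andbT; apply/negP => /eqP Hyd.
      by apply: Hno; exists y.
    case: HH => [[He Ha]|[He Hr]]; [left; split => //; exact/Eq | right; split].
      by move=> H; apply: He; apply/Eq.
    move: Hr; rewrite /Res; case: eqP => // _ [i' [p' [mem' [-> Hag']]]].
    by exists i', p', mem'; split => // j Hj; rewrite Hag' // Hm2.
  have NE : ~ Ext mem d.
    move=> [y [Ha [Hy Hv]]]; apply: Hno; exists y; split => //; split => //.
    have := Hv.1 _ Hdk; move/negbT: Hn; rewrite -leqNgt; move: Hy; lia.
  move: S; case: eqP => Hd0 S.
    exists (Config ((PRej,d,i,d) : St) d m1 [::] E); split.
      apply: reach_le (reach_trans R0 (reach_trans G1 (reach_step S (reach_refl _)))) _.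
      by rewrite mulSn; lia.
    by right; split => //; rewrite /Res Hd0 eqxx.
  exists (mk PInc (inord d.-1) i d m1 [::]); split.
    apply: reach_le (reach_trans R0 (reach_trans G1 (reach_step S (reach_refl _)))) _.
    by rewrite mulSn; lia.
  right; split => //; rewrite /Res; case: eqP => // _.
  by exists i, d, m1; split => // j Hj; apply: Hag; apply: ltnW.
have Hk3 : d * (3 * k + 5) <= k * (3 * k + 5) by apply: leq_mul.
have [p1 [i1 [mem1 [Hm1 HH]]]] := chk Hdk (i := ord0) p0 mem (subn0 _) (leq0n _).
have Hag1 : forall j : 'I_K, j <= d -> mem1 j = mem j by move=> j Hj; apply: Hm1; apply: leq_ltn_trans Hj Hdk.
case: HH => [[Hok [Hi1 R1]]|[Hko R1]]; last first.
  apply: (IC _ _ _ _ R1) => //; first by rewrite /P; nia.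
  move=> [y [Ha [Hy Hv]]]; apply: Hko => j _ Hj.
  by rewrite -Ha // -Hy; apply: Hv.2 => //.
have Hx3 : ~~ (i1 < d) by rewrite Hi1 ltnn.
have S1 := stepNextEnd p1 mem1 [::] Hx3.
have Hext : Agree mem d (fun j => nat_of_ord (mem (inord j))) /\ Valid (fun j => nat_of_ord (mem (inord j))) ->
  Ext mem d.
  move=> [Ha Hv]; exists (fun j => nat_of_ord (mem (inord j))); split => //; split => //.
  by rewrite inord_val.
case: eqP S1 => Hdk1 S1.
  exists (Config ((PAcc,d,i1,p1) : St) p1 mem1 [::] E); split.
    apply: reach_le (reach_trans R1 (reach_step S1 (reach_refl _))) _.
    by rewrite mulSn /P; nia.
  left; split => //; apply: Hext; split.
    by move=> j Hj; rewrite inord_val.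
  split.
    move=> j Hj; have Hj' : j < K by rewrite ltnS ltnW.
    have [Hjd|Hjd] := ltnP j d.
      by have := Hpv.1 (inord j); rewrite inordK //; apply.
    have -> : (@inord k j) = d by apply: inord_eq; move: Hjd Hj Hdk1; lia.
    exact: Hlt.
  move=> a b Hab Hbk.
  have Hb' : b < K by rewrite ltnS ltnW.
  have Ha' : a < K by rewrite ltnS ltnW // (ltn_trans Hab).
  have [Hbd|Hbd] := ltnP b d.
    by have := Hpv.2 (inord a) (inord b); rewrite !inordK //; apply.
  have Eb : (@inord k b) = d by apply: inord_eq; move: Hbd Hbk Hdk1; lia.
  rewrite Eb; apply: (Hok (inord a)); rewrite ?inordK //.
  by rewrite -Eb inordK.
have Hd1 : d.+1 < k by move: Hdk Hdk1; lia.
have Hd1K : d.+1 < K by rewrite ltnS ltnW.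
set d' : 'I_K := inord d.+1.
have Hd' : nat_of_ord d' = d.+1 by rewrite inordK.
have G1 : reach (mk PEnter d' i1 p1 mem1 [::]) (mk PEnter d' i1 d' mem1 [::]) k by apply: goto.
have S2 := stepEnter d' i1 mem1 [::].
set m2 := upd mem1 d' ord0 in S2.
have Hm2 : forall j : 'I_K, j <= d -> m2 j = mem j.
  move=> j Hj; rewrite /m2 /upd; case: eqP => [E1|_]; last by apply: Hag1.
  by move: Hj; rewrite E1 Hd' ltnn.
have Hpv2 : PV m2 d'.
  split.
    move=> j; rewrite Hd' ltnS => Hj; rewrite Hm2 //.
    by case: (ltnP j d) => Hjd; [apply: Hpv.1 | have -> : j = d by apply: val_inj; apply/eqP; rewrite eqn_leq Hj].
  move=> a b Hab; rewrite Hd' ltnS => Hb.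
  have Ha : a <= d by apply: leq_trans (ltnW Hab) Hb.
  rewrite !Hm2 //.
  case: (ltnP b d) => Hbd; first by apply: Hpv.2.
  have Eb : b = d by apply: val_inj; apply/eqP; rewrite eqn_leq Hb.
  by rewrite Eb; apply: Hok => //; rewrite -Eb.
have Hm2d' : nat_of_ord (m2 d') = 0 by rewrite /m2 /upd eqxx.
have Hx4 : d' < k by rewrite Hd'.
have [c'' [R2 HH2]] := deeper d' Hd' Hx4 m2 d' Hpv2 Hm2d'.
have R12 := reach_trans R1 (reach_step S1 (reach_trans G1 (reach_step S2 R2))).
case: HH2 => [[He Hacc]|[He Hr]].
  exists c''; split.
    by apply: reach_le R12 _; rewrite mulSn /P; nia.
  left; split => //.
  move: He => [y [Ha [Hy Hv]]]; exists y; split.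
    by move=> j Hj; rewrite Ha ?Hd' ?Hm2 // ltnW // ltnS ltnW.
  split => //.
  have := Ha d; rewrite Hd' ltnSn Hm2 // => ->//.
move: Hr; rewrite /Res Hd' /= => [[i' [p' [mem' [Ec Hag']]]]].
have Ed : (@inord k d) = d by apply: inord_val.
rewrite Ed in Ec; rewrite Ec in R12.
apply: (IC _ _ mem' _ R12).
- by rewrite /P; nia.
- by move=> j Hj; rewrite Hag' ?Hm2 // Hd' ltnS.
move=> [y [Ha [Hy Hv]]]; apply: He; exists y; split.
  move=> j; rewrite Hd' ltnS leq_eqVlt => /orP [/eqP Hj|Hj].
    have Ej : j = d by apply: val_inj.
    by rewrite Ej Hm2 // Hy.
  by rewrite Hm2 ?Ha // ltnW.
by rewrite Hm2d'; split.
Qed.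


Fixpoint W r := match r with 0 => 0 | r'.+1 => n * (P + W r') end.

Lemma cand_all (Hn : 0 < n) : forall r (d : 'I_K), d < k -> k - d = r.+1 ->
  forall (mem : 'I_K -> 'I_N) (p : 'I_K), PV mem d -> nat_of_ord (mem d) = 0 -> CS d mem p (W r.+1).
Proof.
elim=> [|r IH] d Hdk Hr mem p Hpv H0.
  apply: (cand_loop Hdk (Wd := W 0)) => //; last by rewrite H0.
  - by move=> d' Hd' Hd'k; move: Hd' Hd'k Hr; lia.
  - by rewrite H0 subn0.
apply: (cand_loop Hdk (Wd := W r.+1)) => //; last by rewrite H0.
- move=> d' Hd' Hd'k mem' p' Hpv' H0'; apply: IH => //; move: Hd' Hr; lia.
- by rewrite H0 subn0.
Qed.

End Machine.

Lemma Gn_val n (G : rel 'I_n) (a b : 'I_n) : Gn G a b = G a b.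
Proof. by rewrite /Gn !valK. Qed.

Lemma Gn_irr n (G : rel 'I_n) u : irreflexive G -> Gn G u u = false.
Proof. by move=> Hi; rewrite /Gn; case: (insub u : option 'I_n) => // x; rewrite Hi. Qed.


Lemma clique_iff k n (G : rel 'I_n) : symmetric G -> irreflexive G ->
  has_clique G k <-> exists y, Valid k G y.
Proof.
move=> Hs Hi; split.
  move=> [S [HS Hc]].
  set e := [seq val x | x <- enum S].
  have He : size e = k by rewrite size_map -cardE.
  have Hue : uniq e by rewrite map_inj_uniq ?enum_uniq //; apply: val_inj.
  have Hmem : forall j, j < k -> exists2 x, x \in S & nth 0 e j = val x.
    move=> j Hj; have : nth 0 e j \in e by rewrite mem_nth // He.
    by case/mapP => x; rewrite mem_enum => Hx ->; exists x.
  exists (nth 0 e); split.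
    by move=> j Hj; have [x _ ->] := Hmem j Hj; apply: ltn_ord.
  move=> a b Hab Hb.
  have Ha : a < k by apply: ltn_trans Hb.
  have Hne : nth 0 e a != nth 0 e b by rewrite nth_uniq ?He // neq_ltn Hab.
  have [xa Ha' Ea] := Hmem a Ha; have [xb Hb' Eb] := Hmem b Hb.
  rewrite Ea Eb Gn_val; apply: Hc => //.
  by move: Hne; rewrite Ea Eb; apply: contra => /eqP ->.
move=> [y [Hy1 Hy2]].
pose f (j : 'I_k) : 'I_n := Ordinal (Hy1 j (ltn_ord j)).
have Hf : forall j, val (f j) = y j by [].
have Hinj : injective f.
  move=> a b Hab; apply/eqP; apply/negPn/negP => Hne.
  have Ey : y a = y b by rewrite -!Hf Hab.
  move: Hne; rewrite neq_ltn => /orP [H|H].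
    by move: (Hy2 a b H (ltn_ord b)); rewrite Ey Gn_irr.
  by move: (Hy2 b a H (ltn_ord a)); rewrite Ey Gn_irr.
exists [set f j | j in 'I_k]; split.
  by rewrite card_imset // card_ord.
move=> u v /imsetP [a _ ->] /imsetP [b _ ->] Hne.
have Hab : a != b by apply: contra Hne => /eqP ->.
move: Hab; rewrite neq_ltn => /orP [H|H].
  by move: (Hy2 a b H (ltn_ord b)); rewrite -!Hf Gn_val.
by rewrite Hs; move: (Hy2 b a H (ltn_ord a)); rewrite -!Hf Gn_val.
Qed.

Lemma Wbound k n : 0 < k -> k <= n -> 2 + W k n k <= 34 * (k ^ 2 * n ^ k).
Proof.
move=> Hk Hkn.
have Hp : P k <= 16 * k ^ 2 by rewrite /P; nia.
have Hp1 : 1 <= P k by rewrite /P; nia.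
case: (ltnP n 2) => Hn.
  have En : n = 1 by lia.
  have Ek : k = 1 by lia.
  by rewrite En Ek.
have Cl : forall r, W k n r + 2 * P k <= 2 * P k * n ^ r.
  elim=> [|r IH] /=; first by rewrite expn0 muln1.
  have H := leq_mul (leqnn n) IH.
  rewrite expnS; nia.
have X1 : 1 <= n ^ k by rewrite expn_gt0; lia.
have H1 := Cl k.
have H2 : P k * n ^ k <= 16 * (k ^ 2 * n ^ k) by rewrite mulnA leq_mul.
have H3 : 1 <= k ^ 2 * n ^ k by rewrite muln_gt0 expn_gt0 Hk.
rewrite -mulnA in H1; lia.
Qed.

Theorem lemma2 :
  exists C : nat, forall k : nat, exists Q : finType, forall n : nat,
    exists T : tmtlm Q (alph n) k.+1,
      forall G : rel 'I_n, symmetric G -> irreflexive G ->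
        exists (t io : nat) (cf : config Q (alph n) k.+1),
          [/\ runs T (init_config T G) t io cf,
              halted T cf,
              accepted T cf <-> has_clique G k,
              t <= C * (k ^ 2 * n ^ k)
            & io <= C * (k ^ 2 * n ^ k)].
Proof.
exists 34 => k; exists (St k) => n; exists (Mach k n) => G Hs Hi.
case Hk0 : (k == 0).
  exists 0, 0, (init_config (Mach k n) G); split => //; first exact: runs_refl.
  - by rewrite /halted /= Hk0.
  - rewrite /accepted /= Hk0; split => // _; exists set0; move/eqP: Hk0 => ->.
    by split; [rewrite cards0 | move=> u v; rewrite in_set0].
case Hnk : (n < k).
  exists 0, 0, (init_config (Mach k n) G); split => //; first exact: runs_refl.
  - by rewrite /halted /= Hk0 Hnk.
  - rewrite /accepted /= Hk0 Hnk; split => // [[S [HS _]]].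
    by have := max_card S; rewrite card_ord HS leqNgt Hnk.
have Hk : 0 < k by rewrite lt0n Hk0.
have Hkn : k <= n by rewrite leqNgt Hnk.
have Hn0 : 0 < n by apply: leq_trans Hkn.
set mem0 : 'I_k.+1 -> 'I_(alph n) := fun _ => ord0.
have Hinit : init_config (Mach k n) G = mk G PInit ord0 ord0 ord0 mem0 [::] by [].
have S1 : step (Mach k n) (mk G PInit ord0 ord0 ord0 mem0 [::]) =
          Some (mk G PEnter ord0 ord0 ord0 mem0 [::], false).
  by rewrite stepA //= ?Hk0 ?Hnk // upd_id.
have S2 := stepEnter G ord0 ord0 mem0 [::].
set mem1 := upd mem0 ord0 ord0 in S2.
have Hpv : PV G mem1 ord0 by split.
have H0 : nat_of_ord (mem1 ord0) = 0 by rewrite /mem1 /upd eqxx.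
have Hr : k - (@ord0 k) = k.-1.+1 by rewrite subn0 prednK.
have [c' [R HH]] := cand_all Hn0 (d:=ord0) Hk Hr ord0 Hpv H0.
have [t [io [Rn Hc]]] := reach_step S1 (reach_step S2 R).
rewrite prednK // in Hc.
have Hb := Wbound Hk Hkn.
exists t, io, c'; split.
- by rewrite Hinit.
- rewrite /halted; change (q_kind (Mach k n) (c_state c')) with (knd n (c_state c')).
  by case: HH => [[_ ->]|[_ Hres]] //; move: Hres; rewrite /Res /= => ->.
- rewrite /accepted; change (q_kind (Mach k n) (c_state c')) with (knd n (c_state c')).
  rewrite clique_iff //.
  have Ee : Ext G mem1 ord0 <-> exists y, Valid k G y.
    split; first by move=> [y [_ [_ Hv]]]; exists y.
    by move=> [y Hv]; exists y; split => //; rewrite H0.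
  case: HH => [[He ->]|[He Hres]]; first by split => // _; apply/Ee.
  move: Hres; rewrite /Res /= => ->; split => // H; exfalso; apply: He; exact/Ee.
- lia.
- lia.
Qed.
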